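(* Consider the parallel multiple access channel power allocation game with $K\ge 1$ users and $A\ge 1$ nodes, as described in the context, with random channel gains $g_{k\alpha}$. Let $p\in\Delta$ be a Nash equilibrium of the game, and let $\mathcal{G}$ be any multigraph that represents $p$. Then, almost surely (with respect to the law of the channel gains), $\mathcal{G}$ is a forest, i.e. it contains no cycles (where two distinct edges joining the same pair of nodes also count as a cycle).
   Context: Setting: users $\mathcal{K}=\{1,\dots,K\}$, nodes $\mathcal{A}=\{1,\dots,A\}$. User $k$ has maximum power $P_k>0$ and strategy set $\Delta_k=\{p_k\in\mathbb{R}^{\mathcal{A}}: p_{k\alpha}\ge 0,\ \sum_\alpha p_{k\alpha}=P_k\}$; the profile space is $\Delta=\prod_k\Delta_k$. Payoffs are $u_k(p)=\sum_{\alpha\in\mathcal{A}} b_\alpha\log\bigl(1+\frac{g_{k\alpha}p_{k\alpha}}{\sigma_\alpha^2+\sum_{\ell\neq k}g_{\ell\alpha}p_{\ell\alpha}}\bigr)$, with constants $b_\alpha>0$, $\sigma_\alpha^2>0$, and channel gains $g_{k\alpha}>0$ which are random, drawn from a continuous (nonatomic) probability distribution on the positive reals; all probabilistic statements refer to the law of the $g_{k\alpha}$. A profile $q\in\Delta$ is a Nash equilibrium if $u_k(q)\ge u_k(q_{-k};q_k')$ for all $k$ and all $q_k'\in\Delta_k$. The support of $p_k$ is $\mathrm{supp}(p_k)=\{\alpha: p_{k\alpha}>0\}$. A multigraph $\mathcal{G}=(\mathcal{V},\mathcal{E})$ represents $p\in\Delta$ if $\mathcal{V}=\mathcal{A}$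 and, for each user $k$, there is a node $\alpha\in\mathrm{supp}(p_k)$ (the hub of $k$) which is joined by an edge (owned by user $k$) to every other node $\beta\in\mathrm{supp}(p_k)\setminus\{\alpha\}$, and $\mathcal{E}$ consists exactly of these edges over all users. *)

(* Defs.v *)
From HB Require Import structures.
From mathcomp Require Import all_boot all_order all_algebra.
From mathcomp Require Import all_classical all_reals all_analysis.
Set Implicit Arguments. Unset Strict Implicit. Unset Printing Implicit Defensive.
Import Order.TTheory GRing.Theory Num.Theory.
Local Open Scope ring_scope.

Section Game.
Variables (R : realType) (K A : nat).
(* b : bandwidths b_alpha, s2 : noise variances sigma_alpha^2,
   Pmax : maximum powers P_k, g : channel gains g_{k alpha} *)
Variables (b s2 : 'I_A -> R) (Pmax : 'I_K -> R) (g : 'I_K -> 'I_A -> R).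

Definition profile := 'I_K -> 'I_A -> R.

Definition in_Delta_k (k : 'I_K) (pk : 'I_A -> R) : Prop :=
  (forall a, 0 <= pk a) /\ \sum_(a < A) pk a = Pmax k.

Definition in_Delta (p : profile) : Prop := forall k, in_Delta_k k (p k).

Definition payoff (k : 'I_K) (p : profile) : R :=
  \sum_(a < A) b a * ln (1 + g k a * p k a /
        (s2 a + \sum_(l < K | l != k) g l a * p l a)).

Definition deviate (p : profile) (k : 'I_K) (qk : 'I_A -> R) : profile :=
  fun l => if l == k then qk else p l.

Definition Nash_equilibrium (q : profile) : Prop :=
  in_Delta q /\
  forall k (qk : 'I_A -> R), in_Delta_k k qk -> payoff k (deviate q k qk) <= payoff k q.

End Game.

Definition supp (R : realType) (A : nat) (pk : 'I_A -> R) : pred 'I_A :=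
  fun a => 0 < pk a.

(* The multigraph on the node set 'I_A representing p with hub function h
   (h k = hub of user k, required to lie in supp p_k).  Its edges are indexed
   by pairs (k, beta) with beta in supp p_k, beta <> h k; edge (k, beta) is
   owned by user k and joins h k and beta. *)
Definition repr_edge (R : realType) (K A : nat) (p : 'I_K -> 'I_A -> R)
  (h : 'I_K -> 'I_A) (e : 'I_K * 'I_A) : bool :=
  supp (p e.1) e.2 && (e.2 != h e.1).

Definition repr_joins (K A : nat) (h : 'I_K -> 'I_A) (e : 'I_K * 'I_A)
  (u v : 'I_A) : bool :=
  ((u == h e.1) && (v == e.2)) || ((u == e.2) && (v == h e.1)).

Definition is_hub_choice (R : realType) (K A : nat) (p : 'I_K -> 'I_A -> R)
  (h : 'I_K -> 'I_A) : Prop := forall k, supp (p k) (h k).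

(* A cycle: n+1 pairwise distinct edges e_0..e_n and n+1 pairwise distinct
   vertices v_0..v_n with e_i joining v_i and v_{i+1 mod n+1}.  Two distinct
   parallel edges form a cycle of length 2. *)
Definition has_cycle (R : realType) (K A : nat) (p : 'I_K -> 'I_A -> R)
  (h : 'I_K -> 'I_A) : Prop :=
  exists (n : nat) (es : 'I_n.+1 -> 'I_K * 'I_A) (vs : 'I_n.+1 -> 'I_A),
    injective es /\ injective vs /\
    (forall i, repr_edge p h (es i)) /\
    (forall i, repr_joins h (es i) (vs i) (vs (ordS i))).

Definition is_forest (R : realType) (K A : nat) (p : 'I_K -> 'I_A -> R)
  (h : 'I_K -> 'I_A) : Prop := ~ has_cycle p h.

(* Main.v *)
Require Import Defs.
From HB Require Import structures.
From mathcomp Require Import all_boot all_order all_algebra.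
From mathcomp Require Import all_classical all_reals all_analysis.
From mathcomp Require Import ring lra.
Import Order.TTheory GRing.Theory Num.Theory.
Local Open Scope classical_set_scope.
Local Open Scope ring_scope.

Section PA.
Context (R : realType) (d : measure_display) (Omega : measurableType d)
  (Pr : probability Omega R).

Lemma small_of_decr (F : nat -> set Omega) (eps : R) : 0 < eps ->
  (forall n, measurable (F n)) -> (forall n, F n.+1 `<=` F n) ->
  Pr (\bigcap_n F n) = 0%E -> exists n, (Pr (F n) <= eps%:E)%E.
Proof.
move=> e0 mF decF P0.
have ni : nonincreasing_seq F.
  apply/nonincreasing_seqP => n; exact/subsetPset/decF.
have lt0 : (Pr (F 0%N) < +oo)%E by apply: le_lt_trans (probability_le1 Pr (mF 0%N)) (ltry 1).
have := nonincreasing_cvg_mu lt0 mF (bigcapT_measurable mF) ni.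
move=> h; have : (Pr \o F) n @[n --> \oo] --> (0:R)%:E.
  exact: (@eq_rect _ _ (fun y => (Pr \o F) n @[n --> \oo] --> y) h _ P0).
move=> /fine_cvgP [_ hc].
have := cvgr_lt _ hc _ e0.
move=> [N _ HN]; exists N.
have fin : Pr (F N) \is a fin_num by rewrite ge0_fin_numE // (le_lt_trans (probability_le1 Pr (mF N))) // ltry.
rewrite -(fineK fin) lee_fin; apply/ltW; exact: (HN N (leqnn N)).
Qed.

Lemma mitv (a b : R) : measurable [set x : R | a <= x <= b].
Proof.
have -> : [set x : R | a <= x <= b] = [set` `[a, b]] by apply/seteqP; split => x /=; rewrite in_itv.
exact: measurable_itv.
Qed.
Lemma mitvo (a b : R) : measurable [set x : R | a <= x < b].
Proof.
have -> : [set x : R | a <= x < b] = [set` `[a, b[] by apply/seteqP; split => x /=; rewrite in_itv.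
exact: measurable_itv.
Qed.

Lemma mpre (Z : Omega -> R) (S : set R) : measurable_fun setT Z -> measurable S ->
  measurable (Z @^-1` S).
Proof. by move=> mZ mS; rewrite -(setTI (Z @^-1` S)); exact: (mZ measurableT _ mS). Qed.

Lemma Pr_fin (S : set Omega) : measurable S -> Pr S = (fine (Pr S))%:E.
Proof.
move=> mS; rewrite fineK // ge0_fin_numE //.
exact: le_lt_trans (probability_le1 Pr mS) (ltry 1).
Qed.

Lemma tight (Z : Omega -> R) (eps : R) : measurable_fun setT Z -> 0 < eps ->
  exists M : R, 0 <= M /\ (Pr (Z @^-1` [set x | (M < `|x|)%R]) <= eps%:E)%E.
Proof.
move=> mZ e0.
pose F n := Z @^-1` [set x : R | n%:R < `|x|].
have mF n : measurable (F n).
  apply: mpre => //.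
  have -> : [set x : R | n%:R < `|x|] = ~` [set x | - n%:R <= x <= n%:R].
    by apply/seteqP; split => x /=; rewrite -ler_norml ltNge => /negP.
  apply: measurableC; exact: mitv.
have decF n : F n.+1 `<=` F n.
  by move=> w; rewrite /F /=; apply: le_lt_trans; rewrite ler_nat.
have P0 : Pr (\bigcap_n F n) = 0%E.
  have -> : \bigcap_n F n = set0; last exact: measure0.
  apply/seteqP; split => // w /= H.
  have := H (Num.trunc `|Z w|).+1 I; rewrite /F /=.
  by rewrite ltNge (ltW (truncnS_gt _)).
have [n Hn] := small_of_decr _ _ e0 mF decF P0.
by exists n%:R; split.
Qed.

Lemma nbhd_small (Z : Omega -> R) (s eps : R) : measurable_fun setT Z -> 0 < eps ->
  Pr (Z @^-1` [set s]) = 0%E ->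
  exists2 rho : R, 0 < rho & (Pr (Z @^-1` [set x | (s - rho <= x <= s + rho)%R]) <= eps%:E)%E.
Proof.
move=> mZ e0 Ps.
pose F n := Z @^-1` [set x : R | s - (n.+1%:R)^-1 <= x <= s + (n.+1%:R)^-1].
have mF n : measurable (F n) by apply: mpre => //; exact: mitv.
have decF n : F n.+1 `<=` F n.
  move=> w; rewrite /F /= => /andP [h1 h2].
  have hh : (n.+2%:R : R)^-1 <= (n.+1%:R)^-1.
    by rewrite lef_pV2 ?posrE ?ltr0n // ler_nat.
  apply/andP; split; [apply: le_trans _ h1 | apply: le_trans h2 _]; by rewrite ?lerD2l ?lerN2.
have P0 : Pr (\bigcap_n F n) = 0%E.
  rewrite -Ps; congr (Pr _); apply/seteqP; split => w /=; last first.
    move=> hw n _; rewrite /F /= hw; have hi : (0:R) <= n.+1%:R^-1 by rewrite invr_ge0 ler0n.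
    by apply/andP; split; [rewrite lerBlDr lerDl | rewrite lerDl].
  move=> H; apply/eqP; rewrite -subr_eq0 -normr_eq0; apply: contraT => hne.
  have hp : 0 < `|Z w - s| by rewrite lt_neqAle normr_ge0 andbT eq_sym.
  have := H (Num.trunc (`|Z w - s|^-1)) I; rewrite /F /= => /andP [h1 h2].
  have := truncnS_gt (`|Z w - s|^-1).
  set m := (Num.trunc _).+1%:R => hm.
  have mp : 0 < m by apply: lt_trans hm; rewrite invr_gt0.
  have : m^-1 < `|Z w - s| by rewrite -(invrK `|Z w - s|) ltf_pV2 // ?posrE // invr_gt0.
  by rewrite ltNge ler_distl h1 h2.
have [n Hn] := small_of_decr _ _ e0 mF decF P0.
by exists (n.+1%:R)^-1; rewrite ?invr_gt0 ?ltr0n.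
Qed.


Lemma Prle (A B : set Omega) : measurable A -> measurable B -> A `<=` B ->
  (Pr A <= Pr B)%E.
Proof. by move=> mA mB AB; apply: le_measure => //; rewrite inE. Qed.

Lemma unif_small (Z : Omega -> R) (eps lo hi : R) : measurable_fun setT Z -> 0 < eps ->
  (forall s, Pr (Z @^-1` [set s]) = 0%E) -> lo <= hi ->
  exists2 eta : R, 0 < eta & forall u, lo <= u <= hi ->
    (Pr (Z @^-1` [set x | (u <= x <= u + eta)%R]) <= eps%:E)%E.
Proof.
move=> mZ e0 nat lohi.
pose C (x : R) := exists2 eta : R, 0 < eta & forall u, lo <= u <= x ->
    (Pr (Z @^-1` [set x | (u <= x <= u + eta)%R]) <= eps%:E)%E.
have Cmono x y : x <= y -> C y -> C x.
  move=> xy [eta eta0 H]; exists eta => // u /andP [h1 h2]; apply: H.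
  by rewrite h1 (le_trans h2 xy).
pose S := [set x | x <= hi /\ C x].
have Slo : S lo.
  split => //.
  have [rho rho0 Hr] := @nbhd_small Z lo eps mZ e0 (nat lo).
  exists rho => // u /andP [h1 h2]; have -> : u = lo by apply/le_anti; rewrite h1 h2.
  apply: le_trans Hr; apply: Prle; try (apply: mpre => //; exact: mitv).
  move=> w /= /andP [a b]; apply/andP; split => //; apply: le_trans a; rewrite lerBlDr lerDl; exact: ltW.
have hsS : has_sup S by split; [exists lo | exists hi => x [] ].
set s := sup S.
have ss : lo <= s by exact: (sup_upper_bound hsS Slo).
have [rho rho0 Hr] := @nbhd_small Z s eps mZ e0 (nat s).
have rho2 : 0 < rho / 2 by rewrite divr_gt0.
have [x [xhi [dx dx0 Hx]] xs] := sup_adherent rho2 hsS.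
have Cs : C (s + rho / 2).
  exists (Num.min dx (rho / 2)); first by rewrite lt_min dx0 rho2.
  move=> u /andP [h1 h2].
  have mI a b : measurable (Z @^-1` [set x | (a <= x <= b)%R]) by apply: mpre => //; exact: mitv.
  have [ux|xu] := leP u x.
    apply: le_trans (Hx u _); last by rewrite h1 ux.
    apply: Prle => // w /= /andP [a b]; rewrite a /=; apply: le_trans b _.
    by rewrite lerD2l ge_min lexx.
  apply: le_trans Hr; apply: Prle => // w /= /andP [a b]; apply/andP; split.
    apply: le_trans a; apply: le_trans (ltW xu); rewrite -(lerD2r (rho/2)).
    have : s - rho / 2 < x by [].
    move=> h; have : rho / 2 + rho / 2 = rho by field.
    move=> hr; lra.
  apply: le_trans b _; have := ge_min (rho / 2) dx (rho / 2); rewrite lexx orbT => hm.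
  have hr : rho / 2 + rho / 2 = rho by field.
  set mm := Num.min _ _ in hm *; lra.
have [shi|his] := leP (s + rho / 2) hi.
  have : s + rho / 2 <= s by apply: (sup_upper_bound hsS); split.
  by rewrite gerDl leNgt rho2.
exact: (Cmono _ _ (ltW his) Cs).
Qed.

End PA.

Arguments mpre {R d Omega Z S}.
Arguments tight {R d Omega} Pr {Z eps}.
Arguments unif_small {R d Omega} Pr {Z eps} lo hi.
Arguments Pr_fin {R d Omega} Pr {S}.
Arguments Prle {R d Omega} Pr {A B}.
Arguments mitv {R}. Arguments mitvo {R}.


Section PB.
Context (R : realType) (d : measure_display) (Omega : measurableType d)
  (Pr : probability Omega R).

Lemma Pr_bigU (T : Type) (r : seq T) (P : pred T) (F : T -> set Omega) :
  (forall i, P i -> measurable (F i)) ->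
  (Pr (\big[setU/set0]_(i <- r | P i) F i) <= \sum_(i <- r | P i) Pr (F i))%E.
Proof.
move=> mF; elim: r => [|x r IH]; first by rewrite !big_nil measure0.
rewrite !big_cons; case: ifP => Px //.
apply: le_trans (measureU2 Pr (mF x Px) (bigsetU_measurable _ mF)) _.
exact: leeD.
Qed.

Lemma E_meas (I : finType) (Z : I -> Omega -> R) (c : I -> R) :
  (forall i, measurable_fun setT (Z i)) ->
  measurable [set w | \sum_i c i * Z i w = 0].
Proof.
move=> mZ.
have mf : measurable_fun setT (fun w => \sum_i c i * Z i w).
  apply: measurable_sum => i.
  have -> : (fun w => c i * Z i w) = ( *%R^~ (c i)) \o Z i by apply/funext => w /=; rewrite mulrC.
  exact: (measurableT_comp (measurable_realfun.mulrr_measurable (c i)) (mZ i)).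
have := mpre mf (measurable_set1 0); by [].
Qed.


Lemma mem_bigU (T : eqType) (U : Type) (r : seq T) (P : pred T) (F : T -> set U) x i :
  i \in r -> P i -> F i x -> (\big[setU/set0]_(i <- r | P i) F i) x.
Proof.
elim: r => [//|y r IH]; rewrite inE big_cons => /orP [/eqP <- Pi Fx|ir Pi Fx].
  by rewrite Pi; left.
by case: ifP => _; [right|]; apply: IH.
Qed.

Lemma bigI_mem (T U : Type) (r : seq T) (P : pred T) (F : T -> set U) x :
  (forall i, P i -> F i x) -> (\big[setI/setT]_(i <- r | P i) F i) x.
Proof.
move=> H; elim: r => [|y r IH]; first by rewrite big_nil.
by rewrite big_cons; case: ifP => // Py; split => //; apply: H.
Qed.

Lemma mgt (M : R) : measurable [set x : R | M < `|x|].
Proof.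
have -> : [set x : R | M < `|x|] = ~` [set x | - M <= x <= M].
  by apply/seteqP; split => x /=; rewrite -ler_norml ltNge => /negP.
apply: measurableC; exact: mitv.
Qed.

Lemma lin_null (I : finType) (Z : I -> Omega -> R) (c : I -> R) (x0 : I) :
  (forall i, measurable_fun setT (Z i)) ->
  (forall B : I -> set R, (forall i, measurable (B i)) ->
     Pr (\big[setI/setT]_(i : I) (Z i @^-1` B i)) =
     (\prod_(i : I) Pr (Z i @^-1` B i))%E) ->
  (forall i s, Pr (Z i @^-1` [set s]) = 0%E) ->
  c x0 = 1 ->
  Pr [set w | \sum_i c i * Z i w = 0] = 0%E.
Proof.
move=> mZ ind natm cx0.
set E := [set w | _].
have mE : measurable E by exact: E_meas.
pose N : R := #|I|%:R.
suff H : forall eps, 0 < eps -> (Pr E <= ((N + 1) * eps)%:E)%E.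
  rewrite (Pr_fin Pr mE); congr (_%:E).
  set p := fine (Pr E).
  have p0 : 0 <= p by rewrite /p fine_ge0 // measure_ge0.
  apply/le_anti; rewrite p0 andbT; apply/contraT; rewrite -ltNge => pp.
  have N1 : 0 < N + 1 by rewrite /N; apply: ltr_wpDl => //; exact: ler0n.
  have := H (p / (2 * (N + 1))) (divr_gt0 pp (mulr_gt0 (ltr0Sn _ 1) N1)).
  rewrite (Pr_fin Pr mE) lee_fin -/p.
  have -> : (N + 1) * (p / (2 * (N + 1))) = p / 2 by field; rewrite gt_eqF.
  lra.
move=> eps e0.
have /choice [Mf HM] : forall i, exists M : R, 0 <= M /\
    (Pr (Z i @^-1` [set x | (M < `|x|)%R]) <= eps%:E)%E.
  by move=> i; exact: (tight Pr (mZ i) e0).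
pose M : R := \sum_i Mf i.
have MfM i : Mf i <= M.
  by rewrite /M (bigD1 i) //= lerDl sumr_ge0 // => j _; case: (HM j).
have M0 : 0 <= M by apply: le_trans (MfM x0); case: (HM x0).
pose S : R := \sum_i `|c i|.
have S1 : 1 <= S.
  by rewrite /S (bigD1 x0) //= cx0 normr1 lerDl sumr_ge0.
have S0 : 0 < S by apply: lt_le_trans S1.
have lohi : - (S * (M + 1)) <= S * (M + 1).
  have : 0 <= S * (M + 1) by rewrite mulr_ge0 // ?addr_ge0 // ltW.
  lra.
have [eta eta0 Heta] := unif_small Pr _ _ (mZ x0) e0 (natm x0) lohi.
pose del := Num.min 1 eta / (2 * S).
have mn0 : 0 < Num.min 1 eta by rewrite lt_min ltr01 eta0.
have del0 : 0 < del by rewrite divr_gt0 // mulr_gt0.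
have Sdel : 2 * S * del = Num.min 1 eta by rewrite /del; field; rewrite gt_eqF.
have del2 : 2 * S * del <= eta by rewrite Sdel ge_min lexx orbT.
have del1 : S * del <= 1.
  have : Num.min 1 eta <= 1 by rewrite ge_min lexx.
  rewrite -Sdel => h.
  have : 0 <= S * del by rewrite mulr_ge0 // ltW.
  lra.
pose mm := Num.trunc (2 * M / del).
pose Icell (t : 'I_mm.+1) : set R :=
  [set x | -M + (t : nat)%:R * del <= x < -M + (t : nat).+1%:R * del].
pose Q := fun (j : I) (t : 'I_mm.+1) => (j != x0) || (t == ord0).
pose l (cc : {ffun I -> 'I_mm.+1}) j : R := -M + (cc j : nat)%:R * del.
pose a (cc : {ffun I -> 'I_mm.+1}) : R := - \sum_(j | j != x0) c j * l cc j.
pose B (cc : {ffun I -> 'I_mm.+1}) j : set R := if j == x0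
  then [set x | a cc - S * del <= x <= a cc - S * del + eta] else Icell (cc j).
pose Rect cc := \big[setI/setT]_j (Z j @^-1` B cc j).
pose U1 := \big[setU/set0]_i (Z i @^-1` [set x | M < `|x|]).
pose U2 := \big[setU/set0]_(cc in family Q) Rect cc.
have mB cc j : measurable (B cc j).
  by rewrite /B; case: ifP => _; [exact: mitv | exact: mitvo].
have mRect cc : measurable (Rect cc).
  rewrite /Rect; apply: bigsetI_measurable => j _; apply: mpre; [exact: mZ | exact: mB].
have mT i : measurable (Z i @^-1` [set x | M < `|x|]).
  apply: mpre; first exact: mZ.
  exact (mgt M).
have mU1 : measurable U1.
  rewrite /U1; apply: bigsetU_measurable => i _. exact (mT i).
have mU2 : measurable U2 by rewrite /U2; apply: bigsetU_measurable => cc _; exact: mRect.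
have tM (t : 'I_mm.+1) : (t : nat)%:R * del <= 2 * M.
  have h0 : 0 <= 2 * M / del by apply: divr_ge0; [rewrite mulr_ge0 | exact: ltW].
  have h1 : (t : nat)%:R <= mm%:R :> R by rewrite ler_nat -ltnS.
  have h2 : mm%:R <= 2 * M / del by rewrite /mm truncn_le.
  have := le_trans h1 h2; rewrite ler_pdivlMr //.
have lM cc j : `|l cc j| <= M.
  rewrite /l ler_norml; apply/andP; split.
    by rewrite lerDl mulr_ge0 // ltW.
  have := tM (cc j); lra.
have Sx0 : \sum_(j | j != x0) `|c j| <= S.
  by rewrite /S [leRHS](bigD1 x0) //= lerDr.
have aM cc : `|a cc| <= S * M.
  rewrite /a normrN; apply: le_trans (ler_norm_sum _ _ _) _.
  apply: le_trans (_ : \sum_(j | j != x0) `|c j| * M <= _).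
    by apply: ler_sum => j _; rewrite normrM ler_wpM2l.
  by rewrite -mulr_suml ler_wpM2r.
have incl : E `<=` U1 `|` U2.
  move=> w Ew.
  have [[i Hi]|Hn] := pselect (exists i, M < `|Z i w|).
    left; rewrite /U1; apply: (@mem_bigU _ _ _ _ _ w i) => //; exact: mem_index_enum.
  right.
  have Hle j : `|Z j w| <= M by rewrite leNgt; apply/negP => h; apply: Hn; exists j.
  pose tt j := Num.trunc ((Z j w + M) / del).
  have h0 j : 0 <= (Z j w + M) / del.
    apply: divr_ge0; last exact: ltW.
    by have := Hle j; rewrite ler_norml => /andP [h1 h2]; lra.
  have ttm j : (tt j < mm.+1)%N.
    rewrite ltnS /tt /mm; apply: le_truncn; rewrite ler_pM2r ?invr_gt0 //.
    by have := Hle j; rewrite ler_norml => /andP [h1 h2]; lra.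
  pose cc := [ffun j => if j == x0 then ord0 else (inord (tt j) : 'I_mm.+1)].
  have ccj j : j != x0 -> (cc j : nat) = tt j.
    by move=> /negbTE hj; rewrite /cc ffunE hj inordK.
  have cell j : j != x0 -> Icell (cc j) (Z j w).
    move=> hj; rewrite /Icell /= ccj //.
    have := truncn_itv (h0 j); rewrite -/(tt j) => /andP [h1 h2].
    rewrite ler_pdivlMr // in h1; rewrite ltr_pdivrMr // in h2.
    rewrite -natr1 mulrDl mul1r in h2 *.
    apply/andP; split; lra.
  have lZ j : j != x0 -> `|l cc j - Z j w| <= del.
    move=> hj; have := cell j hj; rewrite /Icell /l /= -natr1 mulrDl mul1r => /andP [h1 h2].
    rewrite ler_distlC; apply/andP; split; lra.
  have ccQ : cc \in family Q.
    apply/familyP => j; rewrite /Q; case: (eqVneq j x0) => [->|hj] //=.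
    by rewrite /cc ffunE eqxx.
  apply: (@mem_bigU _ _ _ _ _ w cc) => //; first exact: mem_index_enum.
  rewrite /Rect; apply: bigI_mem => j _; rewrite /B /=.
  case: eqP => [->|/eqP hj]; last exact: cell.
  have EZ : Z x0 w = - \sum_(j | j != x0) c j * Z j w.
    move: Ew; rewrite /E /= (bigD1 x0) //= cx0 mul1r => /eqP.
    by rewrite addr_eq0 => /eqP.
  have dif : `|Z x0 w - a cc| <= S * del.
    have -> : Z x0 w - a cc = \sum_(j | j != x0) c j * (l cc j - Z j w).
      rewrite EZ /a opprK addrC -sumrB; apply: eq_bigr => k _; by rewrite mulrBr.
    apply: le_trans (ler_norm_sum _ _ _) _.
    apply: le_trans (_ : \sum_(j | j != x0) `|c j| * del <= _).
      by apply: ler_sum => k hk; rewrite normrM ler_wpM2l // lZ.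
    by rewrite -mulr_suml ler_wpM2r // ltW.
  move: dif; rewrite ler_distl => /andP [d1 d2]; apply/andP; split; lra.
have mI j t : measurable (Z j @^-1` Icell t) by apply: mpre; [exact: mZ | exact: mitvo].
have p01 X : measurable X -> 0 <= fine (Pr X) <= 1.
  move=> mX; have h1 := probability_le1 Pr mX; have h0 : (0 <= Pr X)%E := measure_ge0 Pr X.
  rewrite (Pr_fin Pr mX) lee_fin in h1; rewrite (Pr_fin Pr mX) lee_fin in h0.
  by rewrite h0 h1.
have b1 : (Pr U1 <= (N * eps)%:E)%E.
  apply: le_trans (Pr_bigU _ _ _ _ (fun i _ => mT i)) _.
  apply: le_trans (_ : \sum_(i : I) eps%:E <= _)%E.
    apply: lee_sum => i _; apply: le_trans (proj2 (HM i)).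
    apply: Prle; [exact: mT | apply: mpre; [exact: mZ | exact: mgt] |].
    by move=> w /=; apply: le_lt_trans (MfM i).
  by rewrite sumEFin sumr_const -mulr_natl /N.
have b2 : (Pr U2 <= eps%:E)%E.
  apply: le_trans (Pr_bigU _ _ _ _ (fun cc _ => mRect cc)) _.
  have hR cc : Pr (Rect cc) = (\prod_j fine (Pr (Z j @^-1` B cc j)))%:E.
    rewrite /Rect ind // -prodEFin; apply: eq_bigr => j _.
    by apply: Pr_fin; apply: mpre; [exact: mZ | exact: mB].
  rewrite (eq_bigr _ (fun cc _ => hR cc)) sumEFin lee_fin.
  pose f (j : I) (t : 'I_mm.+1) : R :=
    if j == x0 then 1 else fine (Pr (Z j @^-1` Icell t)).
  have hc cc : cc \in family Q ->
      \prod_j fine (Pr (Z j @^-1` B cc j)) <= eps * \prod_j f j (cc j).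
    move=> _; rewrite (bigD1 x0) //= [X in _ <= _ * X](bigD1 x0) //= /f eqxx mul1r.
    have -> : \prod_(j | j != x0) (if j == x0 then 1 else fine (Pr (Z j @^-1` Icell (cc j))))
        = \prod_(j | j != x0) fine (Pr (Z j @^-1` B cc j)).
      by apply: eq_bigr => j /negbTE hj; rewrite hj /B hj.
    apply: ler_wpM2r.
      by apply: prodr_ge0 => j _; have /andP [] := p01 _ (mpre (mZ j) (mB cc j)).
    rewrite /B eqxx.
    have hu : - (S * (M + 1)) <= a cc - S * del <= S * (M + 1).
      have := aM cc; rewrite ler_norml => /andP [h1 h2].
      have : 0 <= S * del by rewrite mulr_ge0 // ltW.
      move=> h3; apply/andP; split; nra.
    have := Heta _ hu.
    rewrite (Pr_fin Pr (mpre (mZ x0) (mitv _ _))) lee_fin; exact.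
  apply: le_trans (ler_sum _ hc) _.
  rewrite -mulr_sumr -bigA_distr_big_dep.
  apply: le_trans (_ : eps * 1 <= _); last by rewrite mulr1.
  apply: ler_wpM2l; first exact: ltW.
  apply: prodr_ile1 => j _; case: (eqVneq j x0) => [->|hj].
    rewrite /Q eqxx /= big_pred1_eq /f eqxx; exact/andP.
  have -> : \sum_(t | Q j t) f j t = \sum_t fine (Pr (Z j @^-1` Icell t)).
    by apply: eq_big => [t|t _]; rewrite /Q ?hj // /f (negbTE hj).
  have triv : trivIset setT (fun t => Z j @^-1` Icell t).
    move=> t t' _ _ [w [/= /andP [h1 h2] /andP [h3 h4]]].
    apply: val_inj => /=; apply/eqP; rewrite eqn_leq.
    have lt1 : ((t : nat)%:R * del < (t' : nat).+1%:R * del) by lra.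
    have lt2 : ((t' : nat)%:R * del < (t : nat).+1%:R * del) by lra.
    rewrite ltr_pM2r // ltr_nat ltnS in lt1.
    rewrite ltr_pM2r // ltr_nat ltnS in lt2.
    by rewrite lt1 lt2.
  have := measure_bigsetU_ord Pr predT (mI j) triv.
  have -> : (\sum_(t < mm.+1 | predT t) Pr (Z j @^-1` Icell t))%E =
      (\sum_t fine (Pr (Z j @^-1` Icell t)))%:E.
    rewrite -sumEFin; apply: eq_bigr => t _; exact: Pr_fin.
  move=> h.
  have hm : measurable (\big[setU/set0]_(i < mm.+1 | predT i) Z j @^-1` Icell i).
    by apply: bigsetU_measurable => t _; exact: mI.
  by have := p01 _ hm; rewrite h /=.
have := leeD b1 b2; rewrite -EFinD mulrDl mul1r => hb.
apply: le_trans hb; apply: le_trans (measureU2 Pr mU1 mU2).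
apply: Prle incl => //; exact: measurableU.
Qed.
End PB.


Section KKT.
Context (R : realType).

Lemma ln_diff_ge (u v : R) : 0 < u -> 0 < v -> 1 - v / u <= ln u - ln v.
Proof.
move=> u0 v0.
have h : -1 < v / u - 1 by have := divr_gt0 v0 u0; lra.
have := le_ln1Dx h.
rewrite addrC subrK ln_div ?posrE //; lra.
Qed.

Lemma key_ineq (bA bB gA gB WA WB pA e : R) :
  0 < bA -> 0 < bB -> 0 < gA -> 0 < gB -> 0 < WA - gA * pA -> 0 < WB ->
  0 < e -> e <= pA ->
  e * (gA * gB * (bA + bB)) < bB * gB * WA - bA * gA * WB ->
  0 < bB * gB * e / (WB + gB * e) - bA * gA * e / (WA - gA * e).
Proof.
move=> bA0 bB0 gA0 gB0 IA WB0 e0 epA HD.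
have d1 : 0 < WB + gB * e by rewrite addr_gt0 // mulr_gt0.
have d2 : 0 < WA - gA * e.
  have : gA * e <= gA * pA by rewrite ler_pM2l.
  lra.
have -> : bB * gB * e / (WB + gB * e) - bA * gA * e / (WA - gA * e) =
  e * (bB * gB * WA - bA * gA * WB - e * (gA * gB * (bA + bB))) /
    ((WB + gB * e) * (WA - gA * e)).
  by field; rewrite ?gt_eqF //.
apply: divr_gt0; last exact: mulr_gt0.
apply: mulr_gt0 => //; lra.
Qed.


Lemma kkt (K A : nat) (b s2 : 'I_A -> R) (Pmax : 'I_K -> R)
  (g : 'I_K -> 'I_A -> R) (p : 'I_K -> 'I_A -> R) (k : 'I_K) (al be : 'I_A) :
  (forall a, 0 < b a) -> (forall a, 0 < s2 a) -> (forall k a, 0 < g k a) ->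
  Nash_equilibrium b s2 Pmax g p -> 0 < p k al ->
  b be * g k be / (s2 be + \sum_l g l be * p l be) <=
  b al * g k al / (s2 al + \sum_l g l al * p l al).
Proof.
move=> hb hs hg [inD NE] pal.
have p0 l a : 0 <= p l a by case: (inD l) => h _; exact: h.
pose I a := s2 a + \sum_(l | l != k) g l a * p l a.
have I0 a : 0 < I a.
  rewrite /I; apply: lt_le_trans (hs a) _; rewrite lerDl.
  by apply: sumr_ge0 => l _; rewrite mulr_ge0 // ltW.
pose W a := s2 a + \sum_l g l a * p l a.
have WI a : W a = I a + g k a * p k a.
  by rewrite /W /I (bigD1 k) //=; ring.
rewrite -/(W be) -/(W al).
have W0 a : 0 < W a.
  by rewrite WI; apply: lt_le_trans (I0 a) _; rewrite lerDl mulr_ge0 // ltW.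
case: (eqVneq al be) => [<-|neq]; first exact: lexx.
rewrite leNgt; apply/negP => Hlt.
pose D := b be * g k be * W al - b al * g k al * W be.
have D0 : 0 < D.
  have := Hlt; rewrite -(ltr_pM2r (mulr_gt0 (W0 al) (W0 be))).
  have -> : b al * g k al / W al * (W al * W be) = b al * g k al * W be.
    by field; rewrite gt_eqF.
  have -> : b be * g k be / W be * (W al * W be) = b be * g k be * W al.
    by field; rewrite gt_eqF.
  rewrite /D; lra.
pose C := g k al * g k be * (b al + b be).
have C0 : 0 < C by rewrite /C !mulr_gt0 // addr_gt0.
pose e := Num.min (p k al) (D / (2 * C)).
have e0 : 0 < e by rewrite lt_min pal divr_gt0 // mulr_gt0.
have epA : e <= p k al by rewrite ge_min lexx.
have eD : e * C < D.
  have : e <= D / (2 * C) by rewrite ge_min lexx orbT.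
  rewrite -(ler_pM2r C0).
  have -> : D / (2 * C) * C = D / 2 by field; rewrite gt_eqF.
  lra.
pose qk a := p k a + (if a == be then e else 0) - (if a == al then e else 0).
have qD : in_Delta_k Pmax k qk.
  split.
    move=> a; rewrite /qk; case: (eqVneq a al) => [->|hal].
      by rewrite (negbTE neq); have := epA; lra.
    case: (eqVneq a be) => [->|hbe]; last by rewrite subr0 addr0.
    by rewrite subr0; apply: addr_ge0 => //; exact: ltW.
  rewrite /qk sumrB big_split /= -!big_mkcond /= !big_pred1_eq.
  by case: (inD k) => _ ->; ring.
have := NE k qk qD.
apply/negP; rewrite -ltNge.
have devk : deviate p k qk k = qk by rewrite /deviate eqxx.
have devl l : l != k -> deviate p k qk l = p l by move=> hl; rewrite /deviate (negbTE hl).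
have Iq a : s2 a + \sum_(l | l != k) g l a * deviate p k qk l a = I a.
  by congr (_ + _); apply: eq_bigr => l hl; rewrite devl.
rewrite /payoff.
rewrite [X in _ < X](eq_bigr (fun a => b a * ln (1 + g k a * qk a / I a))); last first.
  by move=> a _; rewrite Iq devk.
rewrite [X in X < _](eq_bigr (fun a => b a * ln (1 + g k a * p k a / I a))) //.
rewrite -subr_gt0 -sumrB (bigD1 al) //= (bigD1 be) 1?eq_sym //= big1 ?addr0; last first.
  move=> a /andP [hal hbe]; rewrite /qk (negbTE hal) (negbTE hbe) subr0 addr0.
  by rewrite subrr.
have qal : qk al = p k al - e by rewrite /qk eqxx (negbTE neq) addr0.
have qbe : qk be = p k be + e by rewrite /qk eqxx eq_sym (negbTE neq) subr0.
rewrite qal qbe -!mulrBr.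
have Ibe := I0 be; have Ial := I0 al.
have gbe := hg k be; have gal := hg k al.
have pbe := p0 k be.
have ube : 0 < 1 + g k be * (p k be + e) / I be.
  by apply: ltr_wpDr; [apply: divr_ge0; [apply: mulr_ge0; [exact: ltW|apply: addr_ge0 => //; exact: ltW]|exact: ltW]|exact: ltr01].
have vbe : 0 < 1 + g k be * p k be / I be.
  by apply: ltr_wpDr; [apply: divr_ge0; [apply: mulr_ge0; [exact: ltW|exact: pbe]|exact: ltW]|exact: ltr01].
have hIal : 0 < W al - g k al * p k al by rewrite WI; lra.
have d2 : 0 < W al - g k al * e.
  have : g k al * e <= g k al * p k al by rewrite ler_pM2l.
  lra.
have ual : 0 < 1 + g k al * (p k al - e) / I al.
  have -> : 1 + g k al * (p k al - e) / I al = (W al - g k al * e) / I al.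
    by rewrite WI; field; rewrite gt_eqF.
  exact: divr_gt0.
have val : 0 < 1 + g k al * p k al / I al.
  have -> : 1 + g k al * p k al / I al = W al / I al.
    by rewrite WI; field; rewrite gt_eqF.
  exact: divr_gt0.
have Hbe := ln_diff_ge _ _ ube vbe.
have eqbe : 1 - (1 + g k be * p k be / I be) / (1 + g k be * (p k be + e) / I be)
    = g k be * e / (W be + g k be * e).
  rewrite WI; field.
  rewrite (gt_eqF Ibe) andbT gt_eqF //.
  have := W0 be; rewrite WI => h; have := mulr_gt0 gbe e0; lra.
rewrite eqbe in Hbe.
have Hal := ln_diff_ge _ _ ual val.
have eqal : 1 - (1 + g k al * p k al / I al) / (1 + g k al * (p k al - e) / I al)
    = - (g k al * e / (W al - g k al * e)).
  rewrite WI; field.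
  by rewrite (gt_eqF Ial) andbT gt_eqF //; move: d2; rewrite WI; lra.
rewrite eqal in Hal.
have key := key_ineq _ _ _ _ _ _ _ _ (hb al) (hb be) gal gbe hIal (W0 be) e0 epA eD.
have h1 := ler_wpM2l (ltW (hb al)) Hal.
have h2 := ler_wpM2l (ltW (hb be)) Hbe.
move: key h1 h2; rewrite !mulrA; lra.
Qed.

End KKT.


Section Cyc.
Context (R : realType).

Lemma ordS_inord n t : (t < n)%N -> ordS (inord t : 'I_n.+1) = inord t.+1.
Proof.
move=> tn; apply: val_inj => /=; rewrite !inordK ?modn_small //; last by rewrite ltnS ltnW.
all: by rewrite ltnS.
Qed.

Lemma const_of (T : Type) n (f : 'I_n.+1 -> T) : (forall i, f i = f (ordS i)) ->
  forall i, f i = f ord0.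
Proof.
move=> H i; rewrite -(inord_val i).
have : (i <= n)%N by rewrite -ltnS.
elim: (nat_of_ord i) => [|t IH] tn.
  by congr f; apply: val_inj; rewrite /= inordK.
by rewrite -ordS_inord // -H IH // ltnW.
Qed.


Lemma cycle_rel (K A : nat) (b s2 : 'I_A -> R) (Pmax : 'I_K -> R)
  (gw : 'I_K -> 'I_A -> R) (p : 'I_K -> 'I_A -> R) (h : 'I_K -> 'I_A) :
  (forall a, 0 < b a) -> (forall a, 0 < s2 a) -> (forall k a, 0 < gw k a) ->
  Nash_equilibrium b s2 Pmax gw p -> is_hub_choice p h -> has_cycle p h ->
  exists n (ks : 'I_n.+1 -> 'I_K) (vs : 'I_n.+1 -> 'I_A),
    [/\ (n < A)%N, injective vs, exists i, ks i != ks (ordS i) &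
     \prod_i gw (ks i) (vs i) = \prod_i gw (ks i) (vs (ordS i))].
Proof.
move=> hb hs hg NE hub [n [es [vs [ies [ivs [redge joins]]]]]].
exists n, (fun i => (es i).1), vs.
have nA : (n < A)%N by have := leq_card vs ivs; rewrite !card_ord.
have supp2 i : 0 < p (es i).1 (vs i) /\ 0 < p (es i).1 (vs (ordS i)).
  have := redge i; rewrite /repr_edge /supp => /andP [hb1 hb2].
  have hh := hub (es i).1; rewrite /supp in hh.
  by have := joins i; rewrite /repr_joins => /orP [/andP [/eqP -> /eqP ->]|/andP [/eqP -> /eqP ->]].
split => //.
- have [//|Hn] := pselect (exists i, (es i).1 != (es (ordS i)).1).
  exfalso.
  have H i : (es i).1 = (es (ordS i)).1.
    by apply/eqP; apply/negPn/negP => ne; apply: Hn; exists i.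
  have cst := @const_of _ _ (fun i => (es i).1) H.
  set k0 := (es ord0).1 in cst.
  have beta_ne i : (es i).2 != h k0.
    by have := redge i; rewrite /repr_edge cst => /andP [].
  pose j i := if vs i == h k0 then ordS i else i.
  have vsj i : vs (j i) = (es i).2.
    have := joins i; rewrite /repr_joins cst /j.
    case: eqP => hv /=.
      move=> /orP [/eqP //|/andP [/eqP hv2 _]].
      by move: (beta_ne i); rewrite -hv2 hv eqxx.
    by move=> /andP [/eqP -> _].
  have jinj : injective j.
    move=> i i' e; apply: ies.
    have eb : (es i).2 = (es i').2 by rewrite -vsj e vsj.
    move: (cst i) (cst i') eb; case: (es i) => x1 y1; case: (es i') => x2 y2 /= -> -> ->.
    by [].
  have [jinv jK Kj] := injF_bij jinj.
  have [m hm] : exists m, vs m = h k0.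
    have := joins ord0; rewrite /repr_joins -/k0.
    by case/orP => /andP [/eqP h1 /eqP h2]; [exists ord0 | exists (ordS ord0)].
  have := vsj (jinv m); rewrite Kj hm => e.
  by move: (beta_ne (jinv m)); rewrite -e eqxx.
- pose W a := s2 a + \sum_l gw l a * p l a.
  have p0 l a : 0 <= p l a by case: NE => inD _; case: (inD l) => hh _; exact: hh.
  have W0 a : 0 < W a.
    rewrite /W; apply: lt_le_trans (hs a) _; rewrite lerDl.
    by apply: sumr_ge0 => l _; rewrite mulr_ge0 // ltW.
  pose r a := b a / W a.
  have r0 a : 0 < r a by rewrite /r divr_gt0.
  have eq i : gw (es i).1 (vs i) * r (vs i) = gw (es i).1 (vs (ordS i)) * r (vs (ordS i)).
    have [s1 s2'] := supp2 i.
    have := @kkt R K A b s2 Pmax gw p (es i).1 (vs i) (vs (ordS i)) hb hs hg NE s1.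
    have := @kkt R K A b s2 Pmax gw p (es i).1 (vs (ordS i)) (vs i) hb hs hg NE s2'.
    rewrite -/(W (vs i)) -/(W (vs (ordS i))) /r => e1 e2.
    have := le_anti (introT andP (conj e1 e2)).
    by rewrite !mulrA ![_ * b _]mulrC.
  have hp : \prod_i (gw (es i).1 (vs i) * r (vs i)) =
            \prod_i (gw (es i).1 (vs (ordS i)) * r (vs (ordS i))).
    by apply: eq_bigr => i _; exact: eq.
  rewrite big_split [X in _ = X]big_split /= in hp.
  have hr : \prod_i r (vs (ordS i)) = \prod_i r (vs i).
    by rewrite [RHS](reindex_inj (@ordS_inj _)).
  rewrite hr in hp.
  have hX : \prod_i r (vs i) != 0 by rewrite gt_eqF // prodr_gt0.
  exact: (mulIf hX hp).
Qed.

End Cyc.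


Lemma ln_prod (R : realType) (I : Type) (r : seq I) (f : I -> R) :
  (forall i, 0 < f i) -> ln (\prod_(i <- r) f i) = \sum_(i <- r) ln (f i).
Proof.
move=> fp; elim: r => [|x r IH]; first by rewrite !big_nil ln1.
rewrite !big_cons lnM ?IH // posrE //; exact: prodr_gt0.
Qed.

Lemma sum_pick (R : realType) (T : finType) (a : T) (F : T -> R) :
  \sum_x (x == a)%:R * F x = F a.
Proof.
by rewrite (bigD1 a) //= eqxx mul1r big1 ?addr0 // => x /negbTE ->; rewrite mul0r.
Qed.

Lemma shape_null (R : realType) (d : measure_display) (Omega : measurableType d)
  (Pr : probability Omega R) (K A : nat) (g : 'I_K -> 'I_A -> Omega -> R)
  (Hgmeas : forall k a, measurable_fun setT (g k a))
  (Hgpos : forall k a w, 0 < g k a w)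
  (Hgindep : forall B : 'I_K * 'I_A -> set R, (forall i, measurable (B i)) ->
     Pr (\big[setI/setT]_(i : 'I_K * 'I_A) (g i.1 i.2 @^-1` B i)) =
     (\prod_(i : 'I_K * 'I_A) Pr (g i.1 i.2 @^-1` B i))%E)
  (Hgnonatomic : forall k a (x : R), Pr (g k a @^-1` [set x]) = 0%E)
  n (ks : 'I_n.+1 -> 'I_K) (vs : 'I_n.+1 -> 'I_A) :
  injective vs -> (exists i, ks i != ks (ordS i)) ->
  Pr.-negligible [set w | \prod_i g (ks i) (vs i) w = \prod_i g (ks i) (vs (ordS i)) w].
Proof.
move=> ivs [i0 hi0].
pose Z := fun (x : 'I_K * 'I_A) w => ln (g x.1 x.2 w).
have mZ x : measurable_fun setT (Z x).
  exact: measurableT_comp (@measurable_realfun.measurable_ln R) (Hgmeas _ _).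
have mln (B : set R) : measurable B -> measurable ((@ln R) @^-1` B).
  move=> mB; rewrite -(setTI ((@ln R) @^-1` B)).
  exact: (@measurable_realfun.measurable_ln R measurableT _ mB).
have ind : forall B : 'I_K * 'I_A -> set R, (forall i, measurable (B i)) ->
     Pr (\big[setI/setT]_(i : 'I_K * 'I_A) (Z i @^-1` B i)) =
     (\prod_(i : 'I_K * 'I_A) Pr (Z i @^-1` B i))%E.
  by move=> B mB; exact: (Hgindep (fun i => (@ln R) @^-1` B i) (fun i => mln _ (mB i))).
have nat0 x s : Pr (Z x @^-1` [set s]) = 0%E.
  rewrite -(Hgnonatomic x.1 x.2 (expR s)); congr (Pr _).
  apply/seteqP; split => w; rewrite /Z /=.
    by move=> <-; rewrite lnK // posrE.
  by move=> ->; rewrite expRK.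
pose x0 := (ks (ordS i0), vs (ordS i0)).
pose c x : R := \sum_i ((x == (ks i, vs i))%:R - (x == (ks i, vs (ordS i)))%:R).
have cx0 : c x0 = 1.
  rewrite /c (eq_bigr (fun i => (i == ordS i0)%:R)); last first.
    move=> i _.
    have -> : (x0 == (ks i, vs i)) = (i == ordS i0).
      by apply/eqP/eqP => [[_ /ivs <-]|->].
    suff -> : (x0 == (ks i, vs (ordS i))) = false by rewrite subr0.
    apply/negbTE/negP => /eqP [e1 /ivs /ordS_inj e2].
    by move: hi0 e1; rewrite e2 => hh e1; rewrite e1 eqxx in hh.
  by rewrite (bigD1 (ordS i0)) //= eqxx big1 ?addr0 // => i /negbTE ->.
exists [set w | \sum_x c x * Z x w = 0]; split.
- exact: E_meas.
- exact: (@lin_null R d Omega Pr _ Z c x0 mZ ind nat0 cx0).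
move=> w /= hw.
have -> : \sum_x c x * Z x w = \sum_i (Z (ks i, vs i) w - Z (ks i, vs (ordS i)) w).
  rewrite /c; under eq_bigr do rewrite mulr_suml.
  rewrite exchange_big /=; apply: eq_bigr => i _.
  under eq_bigr do rewrite mulrBl.
  by rewrite sumrB !sum_pick.
rewrite sumrB /Z /= -!ln_prod ?hw ?subrr //.
all: by move=> i; apply: Hgpos.
Qed.

Theorem lemma1 (R : realType) (K A : nat) (HK : (0 < K)%N) (HA : (0 < A)%N)
  (b s2 : 'I_A -> R) (Pmax : 'I_K -> R)
  (Hb : forall a, 0 < b a) (Hs2 : forall a, 0 < s2 a) (HP : forall k, 0 < Pmax k)
  (d : measure_display) (Omega : measurableType d) (Pr : probability Omega R)
  (g : 'I_K -> 'I_A -> Omega -> R)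
  (Hgmeas : forall k a, measurable_fun setT (g k a))
  (Hgpos : forall k a w, 0 < g k a w)
  (Hgindep : forall B : 'I_K * 'I_A -> set R, (forall i, measurable (B i)) ->
     Pr (\big[setI/setT]_(i : 'I_K * 'I_A) (g i.1 i.2 @^-1` B i)) =
     (\prod_(i : 'I_K * 'I_A) Pr (g i.1 i.2 @^-1` B i))%E)
  (Hgnonatomic : forall k a (x : R), Pr (g k a @^-1` [set x]) = 0%E) :
  {ae Pr, forall w, forall p : 'I_K -> 'I_A -> R,
     Nash_equilibrium b s2 Pmax (fun k a => g k a w) p ->
     forall h : 'I_K -> 'I_A, is_hub_choice p h -> is_forest p h}.
Proof.
pose Good w := forall (n : 'I_A)
    (sh : {ffun 'I_n.+1 -> 'I_K} * {ffun 'I_n.+1 -> 'I_A}),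
  injective sh.2 -> (exists i, sh.1 i != sh.1 (ordS i)) ->
  \prod_i g (sh.1 i) (sh.2 i) w != \prod_i g (sh.1 i) (sh.2 (ordS i)) w.
have HG : \forall w \ae Pr, Good w.
  apply: filter_forall => n; apply: filter_forall => sh.
  have [[inj nc]|hn] := pselect (injective sh.2 /\ exists i, sh.1 i != sh.1 (ordS i)).
    have [N [mN N0 sN]] := @shape_null R d Omega Pr K A g Hgmeas Hgpos Hgindep Hgnonatomic _ _ _ inj nc.
    exists N; split => // w /= hw; apply: sN => /=.
    by apply/eqP; apply: contrapT => hne; apply: hw => _ _; apply/negP.
  by apply: aeW => w i1 i2; exfalso; apply: hn.
apply: filterS HG => w Gw p NEp h hubp cyc.
have [n [ks [vs [nA ivs nc rel]]]] :=
  @cycle_rel R K A b s2 Pmax (fun k a => g k a w) p h Hb Hs2 (fun k a => Hgpos k a w) NEp hubp cyc.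
have inj' : injective ([ffun i => ks i], [ffun i => vs i]).2.
  by move=> i j /=; rewrite !ffunE; exact: ivs.
have nc' : exists i, ([ffun i => ks i], [ffun i => vs i]).1 i !=
    ([ffun i => ks i], [ffun i => vs i]).1 (ordS i).
  by have [i hi] := nc; exists i; rewrite /= !ffunE.
have := Gw (Ordinal nA) ([ffun i => ks i], [ffun i => vs i]) inj' nc'.
have e1 : \prod_i g (([ffun i => ks i], [ffun i => vs i]).1 i)
   (([ffun i => ks i], [ffun i => vs i]).2 i) w = \prod_i g (ks i) (vs i) w.
  by apply: eq_bigr => i _; rewrite /= !ffunE.
have e2 : \prod_i g (([ffun i => ks i], [ffun i => vs i]).1 i)
   (([ffun i => ks i], [ffun i => vs i]).2 (ordS i)) w =
   \prod_i g (ks i) (vs (ordS i)) w.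
  by apply: eq_bigr => i _; rewrite /= !ffunE.
by rewrite e1 e2 rel eqxx.
Qed.
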